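(* If $G$ is a Tutte-Berge graph, then the induced subgraph of $G$ on $D(G)$ has no edges, i.e. $D(G)$ consists of isolated vertices only.
   Context: $\nu(G)$ is the matching number of $G$. For $U\subseteq V(G)$, $N_G(U)$ is the set of vertices adjacent to at least one vertex of $U$. $G$ is a Tutte-Berge graph if there exists an independent set $T$ of $G$ with $|T| = |N_G(T)| + |V(G)| - 2\nu(G)$. $D(G)$ is the set of vertices of $G$ left uncovered by at least one maximum matching of $G$. *)

(* Defs.v *)
From mathcomp Require Import all_boot.
Set Implicit Arguments. Unset Strict Implicit. Unset Printing Implicit Defensive.

Definition simple_graph (T : finType) (e : rel T) : Prop :=
  symmetric e /\ irreflexive e.

Definition is_edge (T : finType) (e : rel T) (S : {set T}) : bool :=
  [exists u, exists v, (S == [set u; v]) && e u v].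

Definition matching (T : finType) (e : rel T) (M : {set {set T}}) : bool :=
  [forall S in M, is_edge e S] && trivIset M.

Definition nu (T : finType) (e : rel T) : nat :=
  \max_(M : {set {set T}} | matching e M) #|M|.

Definition max_matching (T : finType) (e : rel T) (M : {set {set T}}) : bool :=
  matching e M && (#|M| == nu e).

Definition nbhd (T : finType) (e : rel T) (U : {set T}) : {set T} :=
  [set v | [exists u in U, e u v]].

Definition independent (T : finType) (e : rel T) (U : {set T}) : bool :=
  [forall u in U, forall v in U, ~~ e u v].

Definition tutte_berge (T : finType) (e : rel T) : Prop :=
  exists T0 : {set T}, independent e T0 /\
    #|T0| + 2 * nu e = #|nbhd e T0| + #|T|.

Definition Dset (T : finType) (e : rel T) : {set T} :=
  [set x | [exists M, max_matching e M && (x \notin cover M)]].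

(* Main.v *)
Require Import Defs.
From mathcomp Require Import all_boot.
From mathcomp Require Import zify.

Lemma card2I (T : finType) (a b : T) (X : {set T}) : a != b ->
  #|[set a; b] :&: X| = (a \in X) + (b \in X).
Proof.
move=> ab.
case Ha: (a \in X); case Hb: (b \in X).
- have -> : [set a; b] :&: X = [set a; b].
    by apply/setP=> x; rewrite !inE; case: (eqVneq x a) => [->|_]; 
       [rewrite Ha|case: (eqVneq x b) => [->|]]; rewrite ?Hb ?orbT.
  by rewrite cards2 ab.
- have -> : [set a; b] :&: X = [set a].
    apply/setP=> x; rewrite !inE; case: (eqVneq x a) => [->|_]; rewrite ?Ha //=.
    by case: (eqVneq x b) => [->|]; rewrite ?Hb.
  by rewrite cards1.
- have -> : [set a; b] :&: X = [set b].
    apply/setP=> x; rewrite !inE; case: (eqVneq x b) => [->|_]; rewrite ?Hb ?orbT //=.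
    by case: (eqVneq x a) => [->|]; rewrite ?Ha.
  by rewrite cards1.
- have -> : [set a; b] :&: X = set0.
    apply/setP=> x; rewrite !inE; case: (eqVneq x a) => [->|_]; rewrite ?Ha //=.
    by case: (eqVneq x b) => [->|]; rewrite ?Hb.
  by rewrite cards0.
Qed.

Lemma sumI (T : finType) (M : {set {set T}}) (X : {set T}) : trivIset M ->
  #|cover M :&: X| = \sum_(B in M) #|B :&: X|.
Proof.
move=> tM.
have h : forall A : {set T}, #|A :&: X| = \sum_(x in A | x \in X) 1.
  by move=> A; rewrite sum1_card; apply: eq_card => x; rewrite !inE.
rewrite h big_trivIset_cond //; apply: eq_bigr => B _; by rewrite h.
Qed.

Lemma key (T : finType) (e : rel T) (T0 : {set T}) (M : {set {set T}}) x :
  simple_graph e -> independent e T0 ->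
  #|T0| + 2 * nu e = #|nbhd e T0| + #|T| ->
  max_matching e M -> x \notin cover M -> x \in T0.
Proof.
move=> [sym irr] ind cT0 /andP [/andP [/forallP eM tM] /eqP nM] xC.
have edge : forall B, B \in M -> exists a b, B = [set a; b] /\ e a b.
  move=> B BM; have := eM B; rewrite BM /= => /existsP [a /existsP [b /andP [/eqP -> eab]]].
  by exists a, b.
have cC : #|cover M| = 2 * #|M|.
  case: (leq_card_cover M) => _; rewrite tM => /eqP ->.
  rewrite (eq_bigr (fun _ => 2)); first by rewrite sum_nat_const mulnC.
  move=> B /edge [a [b [-> eab]]]; rewrite cards2.
  by case: (eqVneq a b) => [ab|//]; rewrite ab irr in eab.
have cI : #|cover M :&: T0| <= #|nbhd e T0|.
  apply: (@leq_trans #|cover M :&: nbhd e T0|); last by apply: subset_leq_card; apply: subsetIr.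
  rewrite !sumI //; apply: leq_sum => B /edge [a [b [-> eab]]].
  have ab : a != b by apply/eqP => ab; rewrite ab irr in eab.
  rewrite !card2I //.
  have indP : forall y z, y \in T0 -> z \in T0 -> ~~ e y z.
    by move=> y z yT zT; move/forallP: ind => /(_ y); rewrite yT /= => /forallP /(_ z); rewrite zT.
  case Ha: (a \in T0); case Hb: (b \in T0) => //=.
  - by have := indP _ _ Ha Hb; rewrite eab.
  - have -> : b \in nbhd e T0 by rewrite inE; apply/existsP; exists a; rewrite Ha eab.
    by rewrite addn1.
  - have -> : a \in nbhd e T0 by rewrite inE; apply/existsP; exists b; rewrite Hb sym eab.
    by [].
apply: contraTT xC => xT.
have h1 := cardsC (cover M).
have h2 := cardsID T0 (~: cover M).
have h3 := cardsID (cover M) T0.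
have h4 : #|~: cover M :\: T0| = 0.
  rewrite setIC in h3.
  have : #|T0 :\: cover M| = #|~: cover M :&: T0|.
    by apply: eq_card => y; rewrite !inE andbC.
  move: h1 h2 h3 cT0 cC cI; rewrite nM; lia.
apply/negPn; apply: contraT => xN.
have : x \in ~: cover M :\: T0 by rewrite !inE xN xT.
by rewrite (card0_eq h4).
Qed.

Theorem lemma2p10 (T : finType) (e : rel T) :
  simple_graph e -> tutte_berge e ->
  forall u v, u \in Dset e -> v \in Dset e -> ~~ e u v.
Proof.
move=> sg [T0 [ind cT0]] u v.
rewrite !inE => /existsP [M /andP [mM uM]] /existsP [M' /andP [mM' vM]].
have uT := @key _ _ _ _ _ sg ind cT0 mM uM.
have vT := @key _ _ _ _ _ sg ind cT0 mM' vM.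
by move/forallP: ind => /(_ u); rewrite uT /= => /forallP /(_ v); rewrite vT.
Qed.
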